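(* Let $q\in(0,\infty)$. For each choice of sign, all second-order minors of the infinite matrix $A^{\pm}=(\alpha^{\pm}_{kn})_{k,n\ge0}$ are non-negative; in particular $\alpha^{\pm}_{k,n}\alpha^{\pm}_{k+1,n+1}-\alpha^{\pm}_{k+1,n}\alpha^{\pm}_{k,n+1}\ge0$ for all $k,n\ge0$.
   Context: For $q>0$ and integers $k,n\ge 0$ ($k$ the row index, $n$ the column index), define $$\alpha^{\pm}_{kn}=\frac{k!\,\Gamma(n+2q)}{2^{n+k+2q}}\sum_{m=0}^{\min\{n,k\}}\frac{1\pm(-1)^m}{\Gamma(m+2q)\,m!\,(n-m)!\,(k-m)!}.$$ *)

(* Defs.v *)
From Stdlib Require Import Reals Arith.
Open Scope R_scope.

Fixpoint poch (a : R) (l : nat) : R :=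
  match l with
  | O => 1
  | S l' => poch a l' * (a + INR l')
  end.

(* For m <= n:  Gamma(n+2q)/Gamma(m+2q) = poch (m+2q) (n-m). *)
Definition gamma_ratio (q : R) (n m : nat) : R :=
  poch (INR m + 2 * q) (n - m).

(* Sign: pm = true gives alpha^+, pm = false gives alpha^-. *)
Definition sgn (pm : bool) : R := if pm then 1 else -1.

(* alpha^{pm}_{k n} with k the row index, n the column index. *)
Definition alpha (pm : bool) (q : R) (k n : nat) : R :=
  INR (Factorial.fact k) / Rpower 2 (INR (n + k) + 2 * q) *
  sum_f_R0 (fun m =>
      (1 + sgn pm * (-1) ^ m) * gamma_ratio q n m
      / (INR (Factorial.fact m) * INR (Factorial.fact (n - m)) * INR (Factorial.fact (k - m))))
    (Nat.min n k).

(* Main.v *)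
Require Import Defs.
From Stdlib Require Import Reals Lra Lia Psatz Arith.
Open Scope R_scope.

Lemma sum_minus' (a b : nat -> R) N :
  sum_f_R0 (fun i => a i - b i) N = sum_f_R0 a N - sum_f_R0 b N.
Proof. induction N; simpl; [ring| rewrite IHN; ring]. Qed.

Lemma prod_sums (a b : nat -> R) M N :
  sum_f_R0 a M * sum_f_R0 b N = sum_f_R0 (fun i => sum_f_R0 (fun j => a i * b j) N) M.
Proof.
  induction M; simpl.
  - rewrite scal_sum. apply sum_eq; intros; ring.
  - rewrite Rmult_plus_distr_r, IHM, scal_sum. f_equal. apply sum_eq; intros; ring.
Qed.

Lemma sum_swap (F : nat -> nat -> R) M N :
  sum_f_R0 (fun i => sum_f_R0 (fun j => F i j) N) M =
  sum_f_R0 (fun j => sum_f_R0 (fun i => F i j) M) N.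
Proof.
  induction M.
  - simpl. apply sum_eq; intros; reflexivity.
  - transitivity (sum_f_R0 (fun j => sum_f_R0 (fun i => F i j) M + F (S M) j) N).
    + rewrite sum_plus, <- IHM. reflexivity.
    + apply sum_eq; intros; reflexivity.
Qed.

Lemma minor_nonneg (w : nat -> R) (u : nat -> nat -> R) N k1 k2 n1 n2 :
  (forall m, 0 <= w m) ->
  (forall m m', 0 <= (u k1 m * u k2 m' - u k1 m' * u k2 m) *
                     (u n1 m * u n2 m' - u n1 m' * u n2 m)) ->
  0 <= sum_f_R0 (fun m => w m * u k1 m * u n1 m) N * sum_f_R0 (fun m => w m * u k2 m * u n2 m) N
     - sum_f_R0 (fun m => w m * u k1 m * u n2 m) N * sum_f_R0 (fun m => w m * u k2 m * u n1 m) N.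
Proof.
  intros Hw Hd.
  rewrite !prod_sums.
  set (T := fun i j => w i * u k1 i * u n1 i * (w j * u k2 j * u n2 j)
                     - w i * u k1 i * u n2 i * (w j * u k2 j * u n1 j)).
  assert (E : forall M, sum_f_R0 (fun i => sum_f_R0 (fun j => w i * u k1 i * u n1 i * (w j * u k2 j * u n2 j)) N) M
    - sum_f_R0 (fun i => sum_f_R0 (fun j => w i * u k1 i * u n2 i * (w j * u k2 j * u n1 j)) N) M
    = sum_f_R0 (fun i => sum_f_R0 (fun j => T i j) N) M).
  { intro M. rewrite <- sum_minus'. apply sum_eq; intros. rewrite <- sum_minus'. reflexivity. }
  rewrite E.
  assert (E2 : sum_f_R0 (fun i => sum_f_R0 (fun j => T i j) N) N =
               sum_f_R0 (fun i => sum_f_R0 (fun j => T j i) N) N) by apply sum_swap.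
  assert (P : 0 <= sum_f_R0 (fun i => sum_f_R0 (fun j => T i j) N) N +
                   sum_f_R0 (fun i => sum_f_R0 (fun j => T j i) N) N).
  { rewrite <- sum_plus. apply cond_pos_sum; intro i. rewrite <- sum_plus.
    apply cond_pos_sum; intro j.
    replace (T i j + T j i) with (w i * w j * ((u k1 i * u k2 j - u k1 j * u k2 i) *
                     (u n1 i * u n2 j - u n1 j * u n2 i))) by (unfold T; ring).
    apply Rmult_le_pos; [apply Rmult_le_pos; auto | apply Hd]. }
  lra.
Qed.

Lemma fact_ineq u s t : (Factorial.fact (u + s) * Factorial.fact (u + t) <= Factorial.fact u * Factorial.fact (u + s + t))%nat.
Proof.
  induction s.
  - rewrite !Nat.add_0_r. lia.
  - replace (u + S s)%nat with (S (u + s)) by lia.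
    replace (S (u + s) + t)%nat with (S (u + s + t)) by lia.
    simpl Factorial.fact.
    assert (u + t <= u + s + t)%nat by lia.
    nia.
Qed.

Definition f (k m : nat) : R := if Nat.leb m k then / INR (Factorial.fact (k - m)) else 0.

Lemma f_nonneg k m : 0 <= f k m.
Proof. unfold f. destruct (Nat.leb m k); [|lra].
  left; apply Rinv_0_lt_compat, INR_fact_lt_0. Qed.

Lemma f_mono k1 k2 m m' : (k1 < k2)%nat -> (m < m')%nat ->
  f k1 m' * f k2 m <= f k1 m * f k2 m'.
Proof.
  intros Hk Hm.
  destruct (Nat.leb_spec m' k1).
  - unfold f. rewrite !(proj2 (Nat.leb_le _ _)) by lia.
    set (u := (k1 - m')%nat). set (s := (m' - m)%nat). set (t := (k2 - k1)%nat).
    replace (k1 - m)%nat with (u + s)%nat by (subst u s; lia).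
    replace (k2 - m')%nat with (u + t)%nat by (subst u t; lia).
    replace (k2 - m)%nat with (u + s + t)%nat by (subst u s t; lia).
    pose proof (fact_ineq u s t) as H1. apply le_INR in H1. rewrite !mult_INR in H1.
    pose proof (INR_fact_lt_0 u). pose proof (INR_fact_lt_0 (u+s)).
    pose proof (INR_fact_lt_0 (u+t)). pose proof (INR_fact_lt_0 (u+s+t)).
    rewrite <- !Rinv_mult. apply Rinv_le_contravar; [nra|lra].
  - unfold f at 1. rewrite (proj2 (Nat.leb_gt _ _)) by lia. rewrite Rmult_0_l.
    apply Rmult_le_pos; apply f_nonneg.
Qed.

Lemma f_sign k1 k2 n1 n2 m m' : (k1 < k2)%nat -> (n1 < n2)%nat ->
  0 <= (f k1 m * f k2 m' - f k1 m' * f k2 m) * (f n1 m * f n2 m' - f n1 m' * f n2 m).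
Proof.
  intros Hk Hn. destruct (Nat.lt_total m m') as [H|[H|H]].
  - pose proof (f_mono _ _ _ _ Hk H). pose proof (f_mono _ _ _ _ Hn H).
    apply Rmult_le_pos; lra.
  - subst. right. ring.
  - pose proof (f_mono _ _ _ _ Hk H). pose proof (f_mono _ _ _ _ Hn H).
    nra.
Qed.

Lemma poch_add a m l : poch a (m + l) = poch a m * poch (a + INR m) l.
Proof.
  induction l.
  - rewrite Nat.add_0_r. simpl. ring.
  - rewrite Nat.add_succ_r. simpl. rewrite IHl, plus_INR. ring.
Qed.

Lemma poch_pos a m : 0 < a -> 0 < poch a m.
Proof. intro. induction m; simpl; [lra|]. apply Rmult_lt_0_compat; auto.
  pose proof (pos_INR m); lra. Qed.

Definition w pm q m := (1 + sgn pm * (-1) ^ m) / (poch (2*q) m * INR (Factorial.fact m)).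
Definition g q k := INR (Factorial.fact k) / Rpower 2 (INR k + q).
Definition h q n := poch (2*q) n / Rpower 2 (INR n + q).

Lemma pow_m1 m : (-1) ^ m = 1 \/ (-1) ^ m = -1.
Proof. induction m; simpl; [auto|]. destruct IHm as [->| ->]; [right|left]; ring. Qed.

Lemma w_nonneg pm q m : 0 < q -> 0 <= w pm q m.
Proof.
  intro. unfold w. apply Rmult_le_pos.
  - destruct pm; unfold sgn; destruct (pow_m1 m) as [->| ->]; lra.
  - left; apply Rinv_0_lt_compat, Rmult_lt_0_compat; [apply poch_pos; lra|apply INR_fact_lt_0].
Qed.

Lemma sum_ext_zero (F : nat -> R) a d : (forall i, (a < i)%nat -> F i = 0) ->
  sum_f_R0 F (a + d) = sum_f_R0 F a.
Proof.
  intro H. induction d. - rewrite Nat.add_0_r; reflexivity.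
  - rewrite Nat.add_succ_r. simpl. rewrite IHd, H by lia. ring.
Qed.

Lemma alpha_repr pm q k n N : 0 < q -> (k + n <= N)%nat ->
  alpha pm q k n = g q k * h q n * sum_f_R0 (fun m => w pm q m * f k m * f n m) N.
Proof.
  intros Hq HN. unfold alpha.
  replace N with (Nat.min n k + (N - Nat.min n k))%nat by lia.
  rewrite sum_ext_zero.
  2:{ intros i Hi. unfold f. destruct (Nat.leb_spec i k); destruct (Nat.leb_spec i n);
      try lia; ring. }
  rewrite (scal_sum _ _ (g q k * h q n)).
  rewrite (scal_sum _ _ (_ / _)).
  assert (Hr : Rpower 2 (INR (n + k) + 2 * q) = Rpower 2 (INR k + q) * Rpower 2 (INR n + q)).
  { rewrite <- Rpower_plus. f_equal. rewrite plus_INR. ring. }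
  apply sum_eq; intros i Hi.
  assert (Hik : (i <= k)%nat) by lia. assert (Hin : (i <= n)%nat) by lia.
  unfold f, w, g, h, gamma_ratio. rewrite !(proj2 (Nat.leb_le _ _)) by lia.
  assert (Hp : poch (2*q) n = poch (2*q) i * poch (INR i + 2 * q) (n - i)).
  { replace n with (i + (n - i))%nat at 1 by lia. rewrite poch_add. f_equal. f_equal. ring. }
  rewrite Hp, Hr.
  pose proof (poch_pos (2*q) i ltac:(lra)).
  assert (0 < Rpower 2 (INR k + q)) by (unfold Rpower; apply exp_pos).
  assert (0 < Rpower 2 (INR n + q)) by (unfold Rpower; apply exp_pos).
  pose proof (INR_fact_neq_0 i). pose proof (INR_fact_neq_0 (n-i)). pose proof (INR_fact_neq_0 (k-i)).
  field. repeat split; lra.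
Qed.

Lemma g_nonneg q k : 0 <= g q k.
Proof. unfold g. left. apply Rdiv_lt_0_compat; [apply INR_fact_lt_0|unfold Rpower; apply exp_pos]. Qed.
Lemma h_nonneg q n : 0 < q -> 0 <= h q n.
Proof. intro. unfold h. left. apply Rdiv_lt_0_compat; [apply poch_pos; lra|unfold Rpower; apply exp_pos]. Qed.

Lemma gen_minor q pm k1 k2 n1 n2 : 0 < q -> (k1 < k2)%nat -> (n1 < n2)%nat ->
  alpha pm q k1 n1 * alpha pm q k2 n2 - alpha pm q k1 n2 * alpha pm q k2 n1 >= 0.
Proof.
  intros Hq Hk Hn. set (N := (k1 + k2 + n1 + n2)%nat).
  rewrite !(alpha_repr pm q _ _ N) by (first [exact Hq | unfold N; lia]).
  pose proof (minor_nonneg (w pm q) f N k1 k2 n1 n2 (fun m => w_nonneg pm q m Hq)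
     (fun m m' => f_sign k1 k2 n1 n2 m m' Hk Hn)) as H.
  pose proof (g_nonneg q k1). pose proof (g_nonneg q k2).
  pose proof (h_nonneg q n1 Hq). pose proof (h_nonneg q n2 Hq).
  apply Rle_ge.
  match type of H with 0 <= ?X => 
  replace (_ - _) with (g q k1 * g q k2 * (h q n1 * h q n2) * X) by ring end.
  apply Rmult_le_pos; [apply Rmult_le_pos; apply Rmult_le_pos; auto|exact H].
Qed.

Theorem proposition3p1 (q : R) (hq : 0 < q) (pm : bool) :
  (forall k1 k2 n1 n2 : nat, (k1 < k2)%nat -> (n1 < n2)%nat ->
     alpha pm q k1 n1 * alpha pm q k2 n2 - alpha pm q k1 n2 * alpha pm q k2 n1 >= 0)
  /\
  (forall k n : nat,
     alpha pm q k n * alpha pm q (S k) (S n) - alpha pm q (S k) n * alpha pm q k (S n) >= 0).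
Proof.
  split.
  - intros; apply gen_minor; auto.
  - intros k n. pose proof (gen_minor q pm k (S k) n (S n) hq ltac:(lia) ltac:(lia)). lra.
Qed.
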